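(* Let $p$ be a prime and $\alpha\in\mathbb{Q}_p$ an algebraic number. Then the continued fractions $[b_0,b_1,\dots]$ produced from $\alpha$ by Algorithm A and by Algorithm B (defined in the context) always converge to a $p$-adic number.
   Context: Let $\mathcal{R}=\{-\frac{p-1}{2},\dots,0,\dots,\frac{p-1}{2}\}$ if $p$ is odd, and $\mathcal{R}=\{0,1\}$ if $p=2$. Every nonzero $\alpha\in\mathbb{Q}_p$ is written uniquely as $\alpha=\sum_{n\ge r}a_np^n$ with $r=v_p(\alpha)$, $a_n\in\mathcal{R}$, $a_r\ne0$. Put $s(\alpha)=\sum_{n=r}^{0}a_np^n$, $t(\alpha)=\sum_{n=r}^{-1}a_np^n$ (empty sums are $0$). For an algebraic $\alpha\in\mathbb{Q}_p$ whose minimal polynomial over $\mathbb{Q}$ has degree $d$, with trace $\operatorname{Tr}(\alpha)$, and $\operatorname{round}(x)$ the integer nearest to the real $x$, define $\bar s(\alpha)=\operatorname{round}\!\left(\frac{\operatorname{Tr}(\alpha)/d-s(\alpha)}{p}\right)p+s(\alpha)$ and $\bar t(\alpha)=\operatorname{round}\!\left(\operatorname{Tr}(\alpha)/d-t(\alpha)\right)+t(\alpha)$. An expansion algorithm starts with $\alpha_0=\alpha$; at step $n$ it chooses $b_n$ by a rule; if $\alpha_n=b_n$ it stops, otherwise it sets $\alpha_{n+1}=\frac1{\alpha_n-b_n}$. The continued fraction $[b_0,b_1,\dots]=b_0+\cfrac{1}{b_1+\cfrac{1}{b_2+\cdots}}$ converges if its convergents $[b_0,\dots,b_n]$ converge in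 $\mathbb{Q}_p$. Algorithm A: $b_0=\bar s(\alpha_0)$; for $n\ge1$, $b_n=\bar s(\alpha_n)$ if $v_p(\alpha_n)=0$ and $b_n=\bar t(\alpha_n)$ if $v_p(\alpha_n)<0$. Algorithm B: $b_n=\bar s(\alpha_n)$ if $n$ is even and $b_n=\bar t(\alpha_n)$ if $n$ is odd. *)

(* Defs.v *)
From HB Require Import structures.
From mathcomp Require Import all_boot all_order all_algebra.
From Stdlib Require Import ClassicalEpsilon.
Set Implicit Arguments.
Unset Strict Implicit.
Unset Printing Implicit Defensive.
Import Order.TTheory GRing.Theory Num.Theory.
Local Open Scope ring_scope.

Definition pabs (p : nat) (q : rat) : rat :=
  if q == 0 then 0
  else (p%:R : rat) ^ ((logn p (absz (denq q)))%:Z - (logn p (absz (numq q)))%:Z).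

Definition cvg_to (K : fieldType) (abs : K -> rat) (u : nat -> K) (l : K) : Prop :=
  forall eps : rat, 0 < eps -> exists N : nat, forall n, (N <= n)%N -> abs (u n - l) < eps.

Definition cauchy_seq (K : fieldType) (abs : K -> rat) (u : nat -> K) : Prop :=
  forall eps : rat, 0 < eps -> exists N : nat,
    forall m n, (N <= m)%N -> (N <= n)%N -> abs (u m - u n) < eps.

(* (K, abs) is the field Q_p: a field with a non-archimedean absolute value
   extending |.|_p on Q (embedded via ratr), complete, with Q dense.
   This determines Q_p up to isometric isomorphism. *)
Definition is_Qp (p : nat) (K : fieldType) (abs : K -> rat) : Prop :=
  (forall x, 0 <= abs x) /\
  (forall x, abs x = 0 <-> x = 0) /\
  (forall x y, abs (x * y) = abs x * abs y) /\
  (forall x y, abs (x + y) <= Num.max (abs x) (abs y)) /\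
  (forall q : rat, abs (ratr q) = pabs p q) /\
  (forall u, cauchy_seq abs u -> exists l, cvg_to abs u l) /\
  (forall (x : K) (eps : rat), 0 < eps -> exists q : rat, abs (x - ratr q) < eps).

Definition digit_ok (p : nat) (a : int) : bool :=
  if p == 2%N then (a == 0) || (a == 1) else (absz a <= (p.-1)./2)%N.

(* x = sum_{k>=0} d_k p^(r+k), d_k in R, d_0 <> 0  (so r = v_p(x), a_{r+k} = d_k) *)
Definition trunc_sum (p : nat) (r : int) (d : nat -> int) (N : nat) : rat :=
  \sum_(k < N) (d k)%:~R * (p%:R : rat) ^ (r + (k : nat)%:Z).

Definition is_expansion (p : nat) (K : fieldType) (abs : K -> rat) (x : K)
    (r : int) (d : nat -> int) : Prop :=
  [/\ forall k, digit_ok p (d k), d 0%N != 0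
    & cvg_to abs (fun N => ratr (trunc_sum p r d N)) x].

Definition expansion_of (p : nat) (K : fieldType) (abs : K -> rat) (x : K)
  : int * (nat -> int) :=
  epsilon (inhabits (0%R, fun _ : nat => 0%R))
          (fun e => is_expansion p abs x e.1 e.2).

Definition vp (p : nat) (K : fieldType) (abs : K -> rat) (x : K) : int :=
  (expansion_of p abs x).1.

(* s(x) = sum_{n=r}^{0} a_n p^n,  t(x) = sum_{n=r}^{-1} a_n p^n  (0 for x = 0) *)
Definition s_part (p : nat) (K : fieldType) (abs : K -> rat) (x : K) : rat :=
  if x == 0 then 0 else
  let e := expansion_of p abs x in
  trunc_sum p e.1 e.2 (if e.1 <= 0 then (absz e.1).+1 else 0%N).

Definition t_part (p : nat) (K : fieldType) (abs : K -> rat) (x : K) : rat :=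
  if x == 0 then 0 else
  let e := expansion_of p abs x in
  trunc_sum p e.1 e.2 (if e.1 < 0 then absz e.1 else 0%N).

Definition algebraicQ (K : fieldType) (x : K) : Prop :=
  exists q : {poly rat}, q != 0 /\ root (map_poly ratr q) x.

Definition is_minpoly (K : fieldType) (x : K) (q : {poly rat}) : Prop :=
  [/\ q \is monic, root (map_poly ratr q) x
    & forall q' : {poly rat}, q' != 0 -> root (map_poly ratr q') x ->
        (size q <= size q')%N].

Definition minpolyQ (K : fieldType) (x : K) : {poly rat} :=
  epsilon (inhabits 0) (is_minpoly x).

Definition degQ (K : fieldType) (x : K) : nat := (size (minpolyQ x)).-1.

(* trace = sum of the conjugates = - (coefficient of X^(d-1) of the minimal polynomial) *)
Definition traceQ (K : fieldType) (x : K) : rat := - (minpolyQ x)`_(degQ x).-1.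

Definition roundQ (y : rat) : int := Num.floor (y + 1 / 2).

Definition sbar (p : nat) (K : fieldType) (abs : K -> rat) (x : K) : rat :=
  (roundQ ((traceQ x / (degQ x)%:R - s_part p abs x) / p%:R))%:~R * p%:R
  + s_part p abs x.

Definition tbar (p : nat) (K : fieldType) (abs : K -> rat) (x : K) : rat :=
  (roundQ (traceQ x / (degQ x)%:R - t_part p abs x))%:~R + t_part p abs x.

(* generic expansion algorithm: state alpha_n (None once the algorithm stopped) *)
Fixpoint alg_state (K : fieldType) (rule : nat -> K -> rat) (x : K) (n : nat)
  : option K :=
  match n with
  | 0%N => Some x
  | n'.+1 =>
    match alg_state rule x n' with
    | Some a => if a == ratr (rule n' a) then None
                else Some ((a - ratr (rule n' a))^-1)
    | None => None
    end
  end.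

Definition alg_digit (K : fieldType) (rule : nat -> K -> rat) (x : K) (n : nat) : rat :=
  if alg_state rule x n is Some a then rule n a else 0.

(* cf_eval b i k = [b_i, b_(i+1), ..., b_(i+k)] *)
Fixpoint cf_eval (b : nat -> rat) (i k : nat) : rat :=
  match k with
  | 0%N => b i
  | k'.+1 => b i + (cf_eval b i.+1 k')^-1
  end.

Definition convergent (b : nat -> rat) (n : nat) : rat := cf_eval b 0 n.

Definition ruleA (p : nat) (K : fieldType) (abs : K -> rat) (n : nat) (a : K) : rat :=
  if n == 0%N then sbar p abs a
  else if vp p abs a == 0 then sbar p abs a else tbar p abs a.

Definition ruleB (p : nat) (K : fieldType) (abs : K -> rat) (n : nat) (a : K) : rat :=
  if odd n then tbar p abs a else sbar p abs a.

Definition cf_converges (K : fieldType) (abs : K -> rat)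
    (rule : nat -> K -> rat) (x : K) : Prop :=
  (forall n, alg_state rule x n <> None) ->
  exists l : K, cvg_to abs (fun n => ratr (convergent (alg_digit rule x) n)) l.

(* Main.v *)
Require Import Defs.
From mathcomp Require Import all_boot all_order all_algebra.
From mathcomp Require Import ring lra zify.
From Stdlib Require Import ClassicalEpsilon.
Set Implicit Arguments.
Unset Strict Implicit.
Unset Printing Implicit Defensive.
Import Order.TTheory GRing.Theory Num.Theory.
Local Open Scope ring_scope.

Section Padic.
Variable p : nat.
Hypothesis pp : prime p.
Variable K : fieldType.
Variable abs : K -> rat.
Hypothesis hQ : is_Qp p abs.

Lemma abs_ge0 x : 0 <= abs x. Proof. by case: hQ => h1 [h2 [h3 [h4 [h5 [h6 h7]]]]]. Qed.
Lemma abs_eq0 x : abs x = 0 <-> x = 0. Proof. by case: hQ => h1 [h2 [h3 [h4 [h5 [h6 h7]]]]]. Qed.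
Lemma absM x y : abs (x * y) = abs x * abs y. Proof. by case: hQ => h1 [h2 [h3 [h4 [h5 [h6 h7]]]]]. Qed.
Lemma abs_ultra x y : abs (x + y) <= Num.max (abs x) (abs y).
Proof. by case: hQ => h1 [h2 [h3 [h4 [h5 [h6 h7]]]]]. Qed.
Lemma abs_ratr q : abs (ratr q) = pabs p q. Proof. by case: hQ => h1 [h2 [h3 [h4 [h5 [h6 h7]]]]]. Qed.
Lemma abs_complete u : cauchy_seq abs u -> exists l, cvg_to abs u l.
Proof. by case: hQ => h1 [h2 [h3 [h4 [h5 [h6 h7]]]]]; apply: h6. Qed.
Lemma abs_dense x eps : 0 < eps -> exists q : rat, abs (x - ratr q) < eps.
Proof. by case: hQ => h1 [h2 [h3 [h4 [h5 [h6 h7]]]]]; apply: h7. Qed.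

Lemma abs0 : abs 0 = 0. Proof. by apply/abs_eq0. Qed.
Lemma abs_neq0 x : x != 0 -> abs x != 0.
Proof. by move=> hx; apply/eqP => /abs_eq0 /eqP; rewrite (negbTE hx). Qed.
Lemma abs_gt0 x : x != 0 -> 0 < abs x.
Proof. by move=> hx; rewrite lt_def abs_neq0 // abs_ge0. Qed.
Lemma abs1 : abs 1 = 1.
Proof.
have h : abs 1 = abs 1 * abs 1 by rewrite -absM mulr1.
have h0 : abs 1 != 0 by apply: abs_neq0; exact: oner_neq0.
by apply: (mulfI h0); rewrite -h mulr1.
Qed.
Lemma absN1 : abs (-1) = 1.
Proof.
have h : abs (-1) * abs (-1) = 1 by rewrite -absM mulrNN mulr1 abs1.
have h0 := abs_ge0 (-1).
nra.
Qed.
Lemma absN x : abs (- x) = abs x.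
Proof. by rewrite -mulN1r absM absN1 mul1r. Qed.
Lemma absB x y : abs (x - y) = abs (y - x).
Proof. by rewrite -absN opprB. Qed.
Lemma absV x : abs (x^-1) = (abs x)^-1.
Proof.
have [->|hx] := eqVneq x 0; first by rewrite invr0 abs0 invr0.
have h : abs x * abs x^-1 = 1 by rewrite -absM divff // abs1.
have hx0 := abs_neq0 hx.
by rewrite -[abs x^-1]mul1r -(mulVf hx0) -mulrA h mulr1.
Qed.
Lemma absD_le x y c : abs x <= c -> abs y <= c -> abs (x + y) <= c.
Proof. move=> h1 h2; apply: le_trans (abs_ultra x y) _; by rewrite ge_max h1 h2. Qed.
Lemma absD_lt x y c : abs x < c -> abs y < c -> abs (x + y) < c.
Proof. move=> h1 h2; apply: le_lt_trans (abs_ultra x y) _; by rewrite gt_max h1 h2. Qed.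
Lemma abs_dom x y : abs y < abs x -> abs (x + y) = abs x.
Proof.
move=> h; apply/eqP; rewrite eq_le; apply/andP; split.
  apply: le_trans (abs_ultra x y) _; rewrite ge_max lexx; exact: ltW.
have e : x = (x + y) + (- y) by rewrite addrK.
have := abs_ultra (x + y) (- y); rewrite -e absN.
rewrite le_max => /orP [] // h2; exfalso; move: h2; rewrite leNgt h //.
Qed.


Lemma p_gt1 : (1 < p)%N. Proof. exact: prime_gt1. Qed.
Lemma pR_gt1 : 1 < (p%:R : rat). Proof. by rewrite ltr1n p_gt1. Qed.
Lemma pR_gt0 : 0 < (p%:R : rat). Proof. by have := pR_gt1; lra. Qed.

Lemma pabs_int (z : int) : z != 0 ->
  pabs p z%:~R = ((p%:R : rat) ^+ (logn p `|z|))^-1.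
Proof.
move=> hz; rewrite /pabs intr_eq0 (negbTE hz) numq_int denq_int /= logn1.
by rewrite sub0r -exprnN.
Qed.

Lemma pabs_int_le1 (z : int) : pabs p z%:~R <= 1.
Proof.
have [->|hz] := eqVneq z 0; first by rewrite /pabs eqxx.
rewrite pabs_int // invf_le1; last by apply: exprn_gt0; exact: pR_gt0.
by apply: exprn_ege1; have := pR_gt1; lra.
Qed.

Lemma pabs_int_eq1 (z : int) : z != 0 -> ~~ (p %| `|z|)%N -> pabs p z%:~R = 1.
Proof.
move=> hz hp; rewrite pabs_int // logn_coprime ?expr0 ?invr1 //.
by rewrite prime_coprime.
Qed.

Lemma pabs_neq0 (z : int) : z != 0 -> pabs p z%:~R != 0.
Proof.
move=> hz; rewrite pabs_int // invr_eq0 expf_neq0 //.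
by have := pR_gt0; rewrite lt0r => /andP [].
Qed.

Lemma intK_neq0 (z : int) : z != 0 -> (z%:~R : K) != 0.
Proof.
move=> hz; apply/eqP => e.
have : abs (ratr (z%:~R : rat)) = 0 by rewrite ratr_int e abs0.
by rewrite abs_ratr; apply/eqP; apply: pabs_neq0.
Qed.

Lemma natK_neq0 (n : nat) : (n != 0)%N -> (n%:R : K) != 0.
Proof. by move=> hn; have := @intK_neq0 (n%:Z); rewrite pmulrn; apply. Qed.

Lemma abs_int (z : int) : abs (z%:~R : K) <= 1.
Proof. by rewrite -ratr_int abs_ratr pabs_int_le1. Qed.

Lemma abs_int1 (z : int) : z != 0 -> ~~ (p %| `|z|)%N -> abs (z%:~R : K) = 1.
Proof. by move=> hz hp; rewrite -ratr_int abs_ratr pabs_int_eq1. Qed.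

Definition c : rat := (p%:R)^-1.

Lemma absP : abs (p%:R : K) = c.
Proof.
rewrite -ratr_nat abs_ratr -[p%:R]/((p%:Z)%:~R) pabs_int; last by rewrite -lt0n prime_gt0.
by rewrite /= logn_prime // eqxx expr1.
Qed.

Lemma c_gt0 : 0 < c. Proof. by rewrite invr_gt0 pR_gt0. Qed.
Lemma c_le_half : c <= 2^-1.
Proof.
have h2 : (2:rat) <= p%:R by rewrite ler_nat prime_gt1.
rewrite /c lef_pV2 // ?posrE; try lra; exact: pR_gt0.
Qed.
Lemma c_lt1 : c < 1. Proof. have := c_le_half; lra. Qed.
Lemma P_neq0 : (p%:R : K) != 0.
Proof. by apply: natK_neq0; rewrite -lt0n prime_gt0. Qed.


Lemma denK_neq0 (x : rat) : ((denq x)%:~R : K) != 0.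
Proof. by apply: intK_neq0; exact: denq_neq0. Qed.

Lemma ratr_frac (x : rat) (a b : int) : b != 0 -> x = a%:~R / b%:~R ->
  ratr x = (a%:~R / b%:~R : K).
Proof.
move=> hb ex.
have hbQ : (b%:~R : rat) != 0 by rewrite intr_eq0.
have key : numq x * b = a * denq x.
  apply: (@intr_inj rat); rewrite !intrM numqE ex.
  have hd : ((denq x)%:~R : rat) != 0 by rewrite intr_eq0 denq_neq0.
  by field.
rewrite /ratr; apply/eqP; rewrite eqr_div ?denK_neq0 ?intK_neq0 //.
by rewrite -!intrM key.
Qed.

Lemma ratr_def (x : rat) : x = (numq x)%:~R / (denq x)%:~R.
Proof. by rewrite divq_num_den. Qed.

Lemma ratrD x y : ratr (x + y) = ratr x + ratr y :> K.
Proof.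
have hx := denK_neq0 x; have hy := denK_neq0 y.
rewrite (@ratr_frac (x + y) (numq x * denq y + numq y * denq x) (denq x * denq y)).
- rewrite !intrM intrD !intrM /ratr; field; by apply/andP.
- by rewrite mulf_neq0 ?denq_neq0.
- rewrite {1}(ratr_def x) {1}(ratr_def y) !intrM intrD !intrM.
  have hxQ : ((denq x)%:~R : rat) != 0 by rewrite intr_eq0 denq_neq0.
  have hyQ : ((denq y)%:~R : rat) != 0 by rewrite intr_eq0 denq_neq0.
  field; by apply/andP.
Qed.

Lemma ratrM x y : ratr (x * y) = ratr x * ratr y :> K.
Proof.
have hx := denK_neq0 x; have hy := denK_neq0 y.
rewrite (@ratr_frac (x * y) (numq x * numq y) (denq x * denq y)).
- rewrite !intrM /ratr; field; by apply/andP.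
- by rewrite mulf_neq0 ?denq_neq0.
- rewrite {1}(ratr_def x) {1}(ratr_def y) !intrM.
  have hxQ : ((denq x)%:~R : rat) != 0 by rewrite intr_eq0 denq_neq0.
  have hyQ : ((denq y)%:~R : rat) != 0 by rewrite intr_eq0 denq_neq0.
  field; by apply/andP.
Qed.

Lemma ratr0 : ratr 0 = 0 :> K.
Proof. by have := ratr_int K 0; rewrite !mulr0z. Qed.
Lemma ratr1 : ratr 1 = 1 :> K.
Proof. by have := ratr_int K 1. Qed.

Lemma ratrN x : ratr (- x) = - ratr x :> K.
Proof. by apply/eqP; rewrite -subr_eq0 opprK -ratrD addNr ratr0. Qed.
Lemma ratrB x y : ratr (x - y) = ratr x - ratr y :> K.
Proof. by rewrite ratrD ratrN. Qed.

Lemma ratrV x : ratr (x^-1) = (ratr x)^-1 :> K.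
Proof.
have [->|hx] := eqVneq x 0; first by rewrite invr0 ratr0 invr0.
have h : ratr x * ratr (x^-1) = 1 :> K by rewrite -ratrM divff // ratr1.
have hx0 : ratr x != 0 :> K.
  by apply/eqP => e; move: h; rewrite e mul0r => /eqP; rewrite eq_sym oner_eq0.
by rewrite -[ratr (x^-1)]mul1r -(mulVf hx0) -mulrA h mulr1.
Qed.

Lemma ratrXn x n : ratr (x ^+ n) = (ratr x) ^+ n :> K.
Proof. by elim: n => [|n IH]; rewrite ?expr0 ?ratr1 // !exprS ratrM IH. Qed.

Lemma ratrXz x (z : int) : ratr (x ^ z) = (ratr x) ^ z :> K.
Proof. by case: z => n /=; rewrite ?ratrV ratrXn. Qed.

Lemma ratr_sum (I : Type) (r : seq I) (P : pred I) (F : I -> rat) :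
  ratr (\sum_(i <- r | P i) F i) = \sum_(i <- r | P i) ratr (F i) :> K.
Proof. exact: (big_morph _ ratrD ratr0). Qed.

Lemma ratr_intK (z : int) : ratr z%:~R = z%:~R :> K. Proof. exact: ratr_int. Qed.
Lemma ratr_natK (n : nat) : ratr n%:R = n%:R :> K. Proof. exact: ratr_nat. Qed.


Lemma cz_gt0 (z : int) : 0 < c ^ z. Proof. exact: exprz_gt0 c_gt0. Qed.
Lemma cz_mono (z1 z2 : int) : z1 <= z2 -> c ^ z2 <= c ^ z1.
Proof.
rewrite /c !exprz_inv => h; apply: ler_weXz2l; last by rewrite lerN2.
by have := pR_gt1; lra.
Qed.
Lemma czS (z : int) : c ^ (z + 1) = c ^ z * c.
Proof. by rewrite expfzDr ?expr1z // gt_eqF // c_gt0. Qed.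
Lemma cz_lt (z : int) : c ^ (z + 1) < c ^ z.
Proof.
rewrite czS; have := cz_gt0 z; have := c_lt1; have := c_gt0; nra.
Qed.

Lemma absXn x n : abs (x ^+ n) = abs x ^+ n.
Proof. by elim: n => [|n IH]; rewrite ?expr0 ?abs1 // !exprS absM IH. Qed.

Lemma absPz (z : int) : abs ((p%:R : K) ^ z) = c ^ z.
Proof. by case: z => n /=; rewrite ?absV absXn absP. Qed.

Lemma digit_abs (a : int) : abs (a%:~R : K) <= 1. Proof. exact: abs_int. Qed.

Lemma digit_nz_abs (a : int) : digit_ok p a -> a != 0 -> abs (a%:~R : K) = 1.
Proof.
move=> ha hz; apply: abs_int1 => //; apply/negP => hd.
have hlt : (`|a| < p)%N.
  move: ha; rewrite /digit_ok; case: eqP => [->|hp2].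
    by case/orP => /eqP ->.
  move=> h; apply: leq_ltn_trans h _.
  have := prime_gt1 pp; move: (p) => q hq; rewrite -divn2; 
  apply: leq_ltn_trans (leq_div _ _) _; lia.
have := dvdn_leq _ hd; rewrite absz_gt0 hz => /(_ isT); lia.
Qed.

Definition term (r : int) (d : nat -> int) (k : nat) : K :=
  (d k)%:~R * (p%:R : K) ^ (r + k%:Z).

Lemma ratr_trunc r d N :
  ratr (trunc_sum p r d N) = \sum_(k < N) term r d k :> K.
Proof.
rewrite /trunc_sum ratr_sum; apply: eq_bigr => k _.
by rewrite ratrM ratr_intK ratrXz ratr_natK.
Qed.

Lemma term_abs r d k : (forall k, digit_ok p (d k)) -> abs (term r d k) <= c ^ (r + k%:Z).
Proof.
move=> hd; rewrite /term absM absPz.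
have := digit_abs (d k); have := cz_gt0 (r + k%:Z); have := abs_ge0 ((d k)%:~R); nra.
Qed.

Lemma trunc_tail r d N m : (forall k, digit_ok p (d k)) ->
  abs (\sum_(k < N + m) term r d k - \sum_(k < N) term r d k) <= c ^ (r + N%:Z).
Proof.
move=> hd; elim: m => [|m IH].
  by rewrite addn0 subrr abs0 ltW // cz_gt0.
rewrite addnS big_ord_recr /= addrAC; apply: absD_le => //.
apply: le_trans (term_abs _ _ hd) _; apply: cz_mono; rewrite lerD2l; lia.
Qed.

Lemma exp_bound x r d N : is_expansion p abs x r d ->
  abs (x - \sum_(k < N) term r d k) <= c ^ (r + N%:Z).
Proof.
case=> hd _ hc.
have [M0 hM0] := hc _ (cz_gt0 (r + N%:Z)).
have := hM0 (N + M0)%N (leq_addl _ _); rewrite ratr_trunc => h1.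
have e : x - \sum_(k < N) term r d k =
  (x - \sum_(k < N + M0) term r d k) + (\sum_(k < N + M0) term r d k - \sum_(k < N) term r d k).
  by rewrite addrA subrK.
rewrite e; apply: absD_le; last exact: trunc_tail.
by rewrite absB; apply: ltW.
Qed.

Lemma exp_abs x r d : is_expansion p abs x r d -> abs x = c ^ r.
Proof.
move=> he; have := exp_bound 1 he; case: he => hd h0 _.
rewrite big_ord1 => hb.
have e : x = term r d 0 + (x - term r d 0) by rewrite addrC subrK.
have ht : abs (term r d 0) = c ^ r by rewrite /term absM absPz digit_nz_abs // mul1r addr0.
rewrite e abs_dom ht //.
by apply: le_lt_trans hb _; apply: cz_lt.
Qed.


Lemma val_exists x : x != 0 -> exists r : int, abs x = c ^ r.
Proof.
move=> hx; have [q hq] := abs_dense x (abs_gt0 hx).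
have e : abs (ratr q : K) = abs x.
  have -> : (ratr q : K) = x + (- (x - ratr q)) by ring.
  by rewrite abs_dom // absN.
move: e; rewrite abs_ratr /pabs; case: eqP => [_ e|_ e].
  by have := abs_gt0 hx; rewrite -e ltxx.
by exists (- (Posz (logn p `|denq q|) - Posz (logn p `|numq q|))); rewrite -e /c exprz_inv opprK.
Qed.

Lemma digit_exists y : abs y <= 1 -> exists a : int, digit_ok p a /\ abs (y - a%:~R) <= c.
Proof.
move=> hy; have [q hq] := abs_dense y c_gt0.
have hq1 : abs (ratr q : K) <= 1.
  have -> : (ratr q : K) = y + (- (y - ratr q)) by ring.
  apply: absD_le => //; rewrite absN; have := c_lt1; lra.
have hd0 : denq q != 0 := denq_neq0 q.
have hcop : coprime `|numq q| `|denq q| := coprime_num_den q.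
have hpd : ~~ (p %| `|denq q|)%N.
  apply/negP => hpd.
  have hpn : ~~ (p %| `|numq q|)%N.
    apply/negP => hpn; have : (p %| gcdn `|numq q| `|denq q|)%N by rewrite dvdn_gcd hpn.
    rewrite (eqP hcop) dvdn1 => /eqP hp1; have := prime_gt1 pp; rewrite hp1 //.
  have hn0 : numq q != 0 by apply: contraNneq hpn => ->; exact: dvdn0.
  have habsn : abs ((numq q)%:~R : K) = 1 := abs_int1 hn0 hpn.
  have habsd : abs ((denq q)%:~R : K) <= c.
    have [k hk] : exists k, `|denq q|%N = (k * p)%N by exists (`|denq q| %/ p)%N; rewrite divnK.
    have ed : denq q = (`|denq q|%N)%:Z by rewrite gez0_abs // ltW // denq_gt0.
    rewrite ed hk.
    have -> : (((k * p)%N)%:Z)%:~R = (k%:R * p%:R : K) by rewrite -natrM.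
    rewrite absM absP.
    have := @abs_int (k%:Z); have := c_gt0; have := abs_ge0 (k%:R); simpl; nra.
  have hdpos : 0 < abs ((denq q)%:~R : K) by apply: abs_gt0; exact: intK_neq0.
  have : abs (ratr q : K) = abs ((numq q)%:~R) / abs ((denq q)%:~R) by rewrite /ratr absM absV.
  rewrite habsn mul1r => e; move: hq1; rewrite e invf_le1 // => h.
  have := c_lt1; lra.
have hd1 : abs ((denq q)%:~R : K) = 1 := abs_int1 hd0 hpd.
have [u [v huv]] := Bezoutz p (denq q).
have hg : gcdz p (denq q) = 1.
  rewrite /gcdz /=; have : coprime p `|denq q| by rewrite prime_coprime.
  by move/eqP ->.
rewrite hg in huv.
have hp0 : (p%:Z) != 0 by rewrite eqz_nat -lt0n prime_gt0.
have hp0' : (0 < p%:Z) by rewrite ltz_nat prime_gt0.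
set a0 := ((numq q * v) %% p)%Z.
have ha0 : 0 <= a0 by apply: modz_ge0.
have ha0' : a0 < p by apply: ltz_pmod.
have hdiv := divz_eq (numq q * v) p.
set Q := ((numq q * v) %/ p)%Z in hdiv.
have ea0 : a0 = numq q * v - Q * p by rewrite {1}hdiv; ring.
have hw0 : numq q - a0 * denq q = p%:Z * (numq q * u + Q * denq q).
  have : numq q * (u * p + v * denq q) - (numq q * v - Q * p) * denq q
         = p%:Z * (numq q * u + Q * denq q) by ring.
  by rewrite huv mulr1 -ea0.
pose a : int := if (p == 2)%N then a0 else if a0 <= ((p.-1 %/ 2)%N)%:Z then a0 else a0 - p%:Z.
have [w hw] : exists w, numq q - a * denq q = p%:Z * w.
  rewrite /a; case: (p == 2)%N; first by eexists; exact: hw0.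
  case: ifP => _; first by eexists; exact: hw0.
  exists (numq q * u + Q * denq q + denq q).
  by rewrite mulrDr -hw0; ring.
exists a; split.
  rewrite /digit_ok /a -divn2; have [hp2|hp2] := eqVneq p 2%N.
    rewrite hp2 in ha0'; clearbody a0; lia.
  have hodd : (2 < p)%N by have := prime_gt1 pp; lia.
  have [k hk] : exists k, p = (2 * k + 1)%N.
    case: (even_prime pp) => [/eqP|ho]; first by rewrite (negbTE hp2).
    exists p./2; have e := odd_double_half p; rewrite ho -muln2 in e; lia.
  clearbody a0; case: ifP => h; lia.
have -> : y - a%:~R = (y - ratr q) + (ratr q - a%:~R) by ring.
apply: absD_le; first exact: ltW.
have -> : (ratr q : K) - a%:~R = ((p%:Z * w)%:~R) / (denq q)%:~R.
  rewrite -hw /ratr intrB intrM; field; exact: intK_neq0.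
rewrite absM absV hd1 invr1 mulr1 intrM absM /= absP.
have := abs_int w; have := c_gt0; have := abs_ge0 (w%:~R); nra.
Qed.


Lemma cn_bound (n : nat) : c ^+ n * (n%:R + 1) <= 1.
Proof.
have hc0 := c_gt0; have hc2 := c_le_half.
elim: n => [|n IH]; first by rewrite expr0 mul1r add0r.
have hn := exprn_ge0 n (ltW hc0).
have hn0 : (0 : rat) <= n%:R by rewrite ler0n.
have h1 : c * (n%:R + 2) <= n%:R + 1.
  have h0 : 0 <= 2^-1 - c by lra.
  have hn2 : (0:rat) <= n%:R + 2 by lra.
  have := mulr_ge0 h0 hn2; rewrite mulrBl !mulrDr; lra.
have h2 : c ^+ n * (c * (n%:R + 2)) <= c ^+ n * (n%:R + 1) by apply: ler_wpM2l.
rewrite -natr1 exprS.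
have -> : c * c ^+ n * (n%:R + 1 + 1) = c ^+ n * (c * (n%:R + 2)).
  by rewrite -addrA; ring.
exact: le_trans h2 IH.
Qed.

Lemma cn_small (C eps : rat) : 0 < eps -> 0 <= C ->
  exists N0 : nat, forall N, (N0 <= N)%N -> C * c ^+ N < eps.
Proof.
move=> he hC.
have hc0 := c_gt0.
have hq : 0 <= C / eps by rewrite divr_ge0 // ltW.
set N0 := Num.Def.archi_bound (C / eps).
have hN0 := archi_boundP hq; rewrite -/N0 in hN0.
exists N0 => N hN.
have hmono : c ^+ N <= c ^+ N0 by apply: ler_wiXn2l => //; [exact: ltW | exact: ltW c_lt1].
have h1 := cn_bound N0.
have hcN0 : 0 <= c ^+ N0 := exprn_ge0 N0 (ltW hc0).
apply: le_lt_trans (_ : C * c ^+ N <= C * c ^+ N0) _; first by apply: ler_wpM2l.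
have hN1 : 0 < (N0%:R + 1 : rat) by rewrite natr1 ltr0Sn.
rewrite -(ltr_pM2r hN1).
have h3 : C * c ^+ N0 * (N0%:R + 1) <= C.
  by rewrite -mulrA -[X in _ <= X]mulr1; apply: ler_wpM2l.
have h4 : C < eps * (N0%:R + 1).
  have : C / eps * eps < N0%:R * eps by rewrite ltr_pM2r.
  rewrite divfK ?gt_eqF // => h5; rewrite mulrDr mulr1 mulrC.
  apply: (lt_le_trans h5); rewrite lerDl; exact: ltW.
exact: le_lt_trans h3 h4.
Qed.

Definition dig (y : K) : int :=
  epsilon (inhabits 0) (fun a : int => digit_ok p a /\ abs (y - a%:~R) <= c).

Lemma dig_spec y : abs y <= 1 -> digit_ok p (dig y) /\ abs (y - (dig y)%:~R) <= c.
Proof.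
move=> hy; exact: (epsilon_spec (inhabits 0) (fun a : int => digit_ok p a /\ abs (y - a%:~R) <= c) (digit_exists hy)).
Qed.

Fixpoint ys (y0 : K) (k : nat) : K :=
  match k with
  | 0%N => y0
  | k'.+1 => (ys y0 k' - (dig (ys y0 k'))%:~R) / p%:R
  end.

Lemma ys_le1 y0 : abs y0 <= 1 -> forall k, abs (ys y0 k) <= 1.
Proof.
move=> h0; elim=> [|k IH] //=.
have [_ h] := dig_spec IH.
rewrite absM absV absP /c invrK.
have := pR_gt0; have := abs_ge0 (ys y0 k - (dig (ys y0 k))%:~R); 
rewrite /c in h; set t := abs _ in h *.
move=> ht hp; have hpp : p%:R^-1 * (p%:R : rat) = 1 by rewrite mulVf // gt_eqF.
nra.
Qed.

Lemma expansion_exists x : x != 0 -> exists e : int * (nat -> int), is_expansion p abs x e.1 e.2.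
Proof.
move=> hx; have [r hr] := val_exists hx.
have hP : (p%:R : K) != 0 := P_neq0.
set y0 := x * (p%:R : K) ^ (- r).
have hy0 : abs y0 = 1.
  rewrite /y0 absM absPz hr -expfzDr ?subrr ?expr0z //; by rewrite gt_eqF ?c_gt0.
have hy01 : abs y0 <= 1 by rewrite hy0.
have hys := ys_le1 hy01.
pose d := fun k => dig (ys y0 k).
have hd : forall k, digit_ok p (d k) by move=> k; have [] := dig_spec (hys k).
have hdb : forall k, abs (ys y0 k - (d k)%:~R) <= c by move=> k; have [] := dig_spec (hys k).
have hid : forall N, x = \sum_(k < N) term r d k + (p%:R : K) ^ (r + N%:Z) * ys y0 N.
  elim=> [|N IH].
    rewrite big_ord0 add0r addr0 /= /y0 mulrCA -expfzDr // addrN expr0z mulr1 //.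
  rewrite big_ord_recr /= -addrA {1}IH; congr (_ + _).
  have ez : r + (N.+1)%:Z = (r + N%:Z) + 1 by rewrite intS; ring.
  rewrite ez (expfzDr _ 1 hP) expr1z /term /d; by field.
apply: (ex_intro _ (r, d)); split => //=.
  apply/eqP => e; have := hdb 0%N; rewrite /= -/(d 0%N) e subr0 hy0.
  by have := c_lt1; lra.
move=> eps heps.
have [N0 hN0] := cn_small heps (ltW (cz_gt0 r)).
exists N0 => N hN.
rewrite ratr_trunc {1}(hid N) opprD addrA subrr sub0r absN absM absPz.
apply: le_lt_trans (hN0 N hN).
rewrite expfzDr ?gt_eqF ?c_gt0 // -exprnP.
rewrite -[X in _ <= X]mulr1; apply: ler_wpM2l => //.
by apply: mulr_ge0; [exact: ltW (cz_gt0 r) | exact: exprn_ge0 (ltW c_gt0)].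
Qed.

Lemma exp_spec x : x != 0 ->
  is_expansion p abs x (expansion_of p abs x).1 (expansion_of p abs x).2.
Proof.
move=> hx; rewrite /expansion_of.
apply: (epsilon_spec (inhabits (0%R, fun _ : nat => 0%R)) (fun e => is_expansion p abs x e.1 e.2)).
exact: expansion_exists.
Qed.



Lemma vp_abs x : x != 0 -> abs x = c ^ (vp p abs x).
Proof. by move=> hx; rewrite /vp; apply: exp_abs (exp_spec hx). Qed.

Lemma s_close x : abs (x - ratr (s_part p abs x)) <= c.
Proof.
rewrite /s_part; have [->|hx] := eqVneq x 0.
  by rewrite ?eqxx ratr0 subrr abs0 ltW // c_gt0.
rewrite ?(negbTE hx) /=.
have he := exp_spec hx.
move: he; case: (expansion_of p abs x) => r d /= he.
rewrite ratr_trunc; case: ifP => hr.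
  apply: le_trans (exp_bound _ he) _.
  have -> : r + (`|r|.+1)%:Z = 1 by lia.
  by rewrite expr1z.
rewrite big_ord0 subr0 (exp_abs he) -[X in _ <= X]expr1z; apply: cz_mono; lia.
Qed.

Lemma t_close x : abs (x - ratr (t_part p abs x)) <= 1.
Proof.
rewrite /t_part; have [->|hx] := eqVneq x 0.
  by rewrite ?eqxx ratr0 subrr abs0 ler01.
rewrite ?(negbTE hx) /=.
have he := exp_spec hx.
move: he; case: (expansion_of p abs x) => r d /= he.
rewrite ratr_trunc; case: ifP => hr.
  apply: le_trans (exp_bound _ he) _.
  have -> : r + (`|r|%N)%:Z = 0 by lia.
  by rewrite expr0z.
rewrite big_ord0 subr0 (exp_abs he) -(expr0z c); apply: cz_mono; lia.
Qed.

Lemma sbar_close x : abs (x - ratr (sbar p abs x)) <= c.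
Proof.
rewrite /sbar ratrD ratrM ratr_intK ratr_natK.
set k := roundQ _.
have -> : x - ((k%:~R : K) * p%:R + ratr (s_part p abs x)) =
  (x - ratr (s_part p abs x)) + (- ((k%:~R : K) * p%:R)) by ring.
apply: absD_le; first exact: s_close.
rewrite absN absM absP.
have := abs_int k; have := c_gt0; have := abs_ge0 (k%:~R : K); nra.
Qed.

Lemma tbar_close x : abs (x - ratr (tbar p abs x)) <= 1.
Proof.
rewrite /tbar ratrD ratr_intK.
set k := roundQ _.
have -> : x - ((k%:~R : K) + ratr (t_part p abs x)) =
  (x - ratr (t_part p abs x)) + (- (k%:~R : K)) by ring.
apply: absD_le; first exact: t_close.
by rewrite absN; exact: abs_int.
Qed.


Lemma div_sq_le (e v : rat) : 0 <= e -> 1 <= v -> e / v ^+ 2 <= e.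
Proof.
move=> he hv; have hv0 : 0 < v by lra.
have hw : v^-1 <= 1 by rewrite invf_le1.
have hw0 : 0 <= v^-1 by rewrite invr_ge0 ltW.
rewrite -exprVn expr2 -[X in _ <= X]mulr1; apply: ler_wpM2l => //.
have := ler_wpM2l hw0 hw; rewrite mulr1 => h; lra.
Qed.

Lemma div_sq_lec (e v : rat) : 0 <= e -> c^-1 <= v -> e / v ^+ 2 <= c * e.
Proof.
move=> he hv; have hc := c_gt0; have hc1 := c_lt1.
have hc' : 1 < c^-1 by rewrite invf_gt1.
have hv0 : 0 < v by lra.
have hw0 : 0 <= v^-1 by rewrite invr_ge0 ltW.
have hw : v^-1 <= c.
  have h1 : 1 <= c * v.
    have := ler_wpM2l (ltW hc) hv; rewrite mulfV ?gt_eqF //.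
  have := ler_wpM2l hw0 h1; rewrite mulr1 mulrCA mulVf ?gt_eqF // mulr1.
  done.
have hw1 : v^-1 <= 1 by lra.
rewrite mulrC -exprVn expr2; apply: ler_wpM2r => //.
have := ler_wpM2l hw0 hw1; rewrite mulr1 => h; lra.
Qed.

Lemma cf_main (b : nat -> rat) (al : nat -> K) :
  (forall n, al n.+1 = (al n - ratr (b n))^-1) ->
  (forall n, al n - ratr (b n) != 0) ->
  (forall n, abs (al n - ratr (b n)) <= c \/
             (c^-1 <= abs (al n) /\ abs (al n - ratr (b n)) <= 1)) ->
  cvg_to abs (fun n => ratr (convergent b n)) (al 0%N).
Proof.
move=> hR hne h2.
have hc := c_gt0; have hc1 := c_lt1.
have hc' : 1 < c^-1 by rewrite invf_gt1.
pose u n := abs (al n).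
pose dl n := abs (al n - ratr (b n)).
have hdl0 n : 0 < dl n := abs_gt0 (hne n).
have hdl1 n : dl n <= 1 by case: (h2 n) => [h|[_ h]] //; rewrite /dl; lra.
have hu n : u n.+1 = (dl n)^-1 by rewrite /u hR absV.
have hu1 n : 1 <= u n.+1 by rewrite hu invf_ge1.
have hal0 n : al n.+1 != 0.
  apply/eqP => e; have := hu1 n; rewrite /u e abs0; lra.
pose T i k : K := ratr (cf_eval b i k).
have hT i k : T i k.+1 = ratr (b i) + (T i.+1 k)^-1 by rewrite /T /= ratrD ratrV.
have hdu i : (0 < i)%N -> dl i < u i.
  case: i => // m _; have := hu1 m.
  case: (h2 m.+1) => [h|[h h']] h1; rewrite /u /dl in h1 *; lra.
have hbabs i : (0 < i)%N -> abs (ratr (b i) : K) = u i.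
  move=> hi; have -> : (ratr (b i) : K) = al i + (- (al i - ratr (b i))) by ring.
  by rewrite abs_dom // absN; exact: hdu.
have hTabs : forall k i, (0 < i)%N -> abs (T i k) = u i.
  elim=> [|k IH] i hi; first exact: hbabs.
  rewrite hT abs_dom (hbabs i hi) // absV IH // hu invrK; exact: hdu.
pose E i k := abs (al i - T i k).
have hE i k : E i k.+1 = E i.+1 k / (u i.+1 ^+ 2).
  have hB : T i.+1 k != 0.
    apply/eqP => e; have := hTabs k i.+1 isT; rewrite e abs0 => e2.
    have := hu1 i; rewrite -e2; lra.
  have hA := hal0 i.
  have e1 : al i - T i k.+1 = - ((al i.+1 - T i.+1 k) / (al i.+1 * T i.+1 k)).
    by rewrite hT hR; field; rewrite hne hB.
  rewrite /E e1 absN absM absV absM (hTabs k i.+1 isT) expr2 //.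
have hEge0 i k : 0 <= E i k by exact: abs_ge0.
have hEle k i : E i k.+1 <= E i.+1 k by rewrite hE; apply: div_sq_le.
have hEc k i : c^-1 <= u i.+1 -> E i k.+1 <= c * E i.+1 k.
  by move=> h; rewrite hE; apply: div_sq_lec.
have hEle1 : forall k i, E i k <= 1.
  elim=> [|k IH] i; first exact: hdl1.
  exact: le_trans (hEle k i) (IH i.+1).
have hE2 k i : E i k.+2 <= c * E i.+2 k.
  case: (h2 i.+1) => [h|[h _]].
  - apply: le_trans (hEle _ _) _; apply: (hEc).
    by rewrite hu lef_pV2 ?posrE ?invr_gt0 //; exact: pR_gt0.
  - apply: le_trans (hEc _ _ h) _; apply: ler_wpM2l; [exact: ltW | exact: hEle].
have hEm : forall m i k, E i (k + 2 * m)%N <= c ^+ m.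
  elim=> [|m IH] i k; first by rewrite muln0 addn0 expr0.
  have -> : (k + 2 * m.+1 = (k + 2 * m).+2)%N by lia.
  apply: le_trans (hE2 _ _) _; rewrite exprS; apply: ler_wpM2l; [exact: ltW | exact: IH].
move=> eps heps.
have [m hm] := cn_small heps ler01.
exists (2 * m)%N => n hn.
have := hEm m 0%N (n - 2 * m)%N; rewrite subnK // => h.
rewrite absB; apply: le_lt_trans h _.
by have := hm m (leqnn m); rewrite mul1r.
Qed.


Definition R2 (rule : nat -> K -> rat) (al : nat -> K) (n : nat) : Prop :=
  abs (al n - ratr (rule n (al n))) <= c \/
  (c^-1 <= abs (al n) /\ abs (al n - ratr (rule n (al n))) <= 1).

Lemma alg_conv (rule : nat -> K -> rat) x :
  (forall n, alg_state rule x n <> None) ->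
  (forall al : nat -> K, (forall n, al n.+1 = (al n - ratr (rule n (al n)))^-1) ->
     (forall n, al n - ratr (rule n (al n)) != 0) -> forall n, R2 rule al n) ->
  exists l : K, cvg_to abs (fun n => ratr (convergent (alg_digit rule x) n)) l.
Proof.
move=> hs hR2.
pose al n := odflt 0 (alg_state rule x n).
have hsome n : alg_state rule x n = Some (al n).
  by rewrite /al; case: (alg_state rule x n) (hs n).
have hrec n : al n.+1 = (al n - ratr (rule n (al n)))^-1 /\ al n - ratr (rule n (al n)) != 0.
  have := hsome n.+1; rewrite /= hsome; case: eqP => // hne [<-]; split => //.
  by rewrite subr_eq0; apply/eqP.
have hdig n : alg_digit rule x n = rule n (al n) by rewrite /alg_digit hsome.
have h2 := hR2 al (fun n => (hrec n).1) (fun n => (hrec n).2).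
exists (al 0%N); apply: cf_main => n; rewrite hdig.
- exact: (hrec n).1.
- exact: (hrec n).2.
- exact: h2.
Qed.

Lemma absal_ge (rule : nat -> K -> rat) (al : nat -> K) n :
  al n.+1 = (al n - ratr (rule n (al n)))^-1 ->
  al n - ratr (rule n (al n)) != 0 ->
  abs (al n.+1) = (abs (al n - ratr (rule n (al n))))^-1.
Proof. by move=> -> _; rewrite absV. Qed.

Lemma R2_B al : (forall n, al n.+1 = (al n - ratr (ruleB p abs n (al n)))^-1) ->
  (forall n, al n - ratr (ruleB p abs n (al n)) != 0) -> forall n, R2 (ruleB p abs) al n.
Proof.
move=> hrec hne n; rewrite /R2 /ruleB.
case: n => [|m] /=; first by left; exact: sbar_close.
case ho: (odd m) => /=; first by left; exact: sbar_close.
right; split; last exact: tbar_close.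
rewrite (absal_ge (hrec m) (hne m)) /ruleB ho.
have h0 := abs_gt0 (hne m); rewrite /ruleB ho in h0.
have hc := c_gt0; rewrite lef_pV2 ?posrE //; exact: sbar_close.
Qed.

Lemma int_aux (v : int) : -1 < v -> v <> 0 -> 1 <= v.
Proof. lia. Qed.

Lemma R2_A al : (forall n, al n.+1 = (al n - ratr (ruleA p abs n (al n)))^-1) ->
  (forall n, al n - ratr (ruleA p abs n (al n)) != 0) -> forall n, R2 (ruleA p abs) al n.
Proof.
move=> hrec hne; elim=> [|n IH]; rewrite /R2 /ruleA /=.
  by left; exact: sbar_close.
case: eqP => hv; first by left; exact: sbar_close.
right; split; last exact: tbar_close.
have hd1 : abs (al n - ratr (ruleA p abs n (al n))) <= 1.
  by case: IH => [h|[_ h]] //; have := c_lt1; lra.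
have hd0 := abs_gt0 (hne n).
have hge1 : 1 <= abs (al n.+1) by rewrite (absal_ge (hrec n) (hne n)) invf_ge1.
have hnz : al n.+1 != 0 by apply/eqP => e; move: hge1; rewrite e abs0; lra.
move: hge1; rewrite (vp_abs hnz) => hge1.
have hle : vp p abs (al n.+1) <= -1.
  rewrite leNgt; apply/negP => hlt.
  have h1 : 1 <= vp p abs (al n.+1).
    by move: hlt hv; apply: int_aux.
  have := cz_mono h1; rewrite expr1z => h.
  by have := lt_le_trans (lt_le_trans c_lt1 hge1) h; rewrite ltxx.
have := cz_mono hle; rewrite -exprz_inv expr1z //.
Qed.

End Padic.

Theorem proposition3 (p : nat) (K : fieldType) (abs : K -> rat) (x : K) :
  prime p -> is_Qp p abs -> algebraicQ x ->
  cf_converges abs (ruleA p abs) x /\ cf_converges abs (ruleB p abs) x.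
Proof.
move=> pp hQ _; split => hs.
- apply: (alg_conv pp hQ) => //; exact: (R2_A pp hQ).
- apply: (alg_conv pp hQ) => //; exact: (R2_B pp hQ).
Qed.
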